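(* Let $\{a_n\}_{n\ge1}$ be a sequence of positive real numbers. Suppose that at least one of the following holds: either $\frac{a_{2n}}{a_n}>1$ for all sufficiently large $n$, or $\frac{a_{2n+1}}{a_n}>1+\frac{1}{2n}$ for all sufficiently large $n$. Then $\sum_{n=1}^\infty a_n$ diverges. *)

(* Defs.v *)
From Stdlib Require Import Reals.
Open Scope R_scope.

(* Partial sums of a sequence indexed from 1: S_N = a_1 + ... + a_(N+1). *)
Definition partial_sum1 (a : nat -> R) (N : nat) : R :=
  sum_f_R0 (fun k => a (S k)) N.

Definition series1_converges (a : nat -> R) : Prop :=
  exists l : R, Un_cv (partial_sum1 a) l.

(* Main.v *)
Require Import Defs.
From Stdlib Require Import Reals Lra Lia.
Open Scope R_scope.

Lemma key (a : nat -> R) (N : nat) (h : nat -> nat) :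
  (1 <= N)%nat -> (forall n, (1 <= n)%nat -> 0 < a n) ->
  (forall n, (N <= n)%nat -> (n < h n)%nat /\ a n < a (h n)) ->
  ~ series1_converges a.
Proof.
  intros HN hpos Hh [l Hl].
  assert (Hc : Cauchy_crit (partial_sum1 a)).
  { apply CV_Cauchy. exists l. exact Hl. }
  assert (claim : forall k, exists j, (N + k <= j)%nat /\ a N <= a j).
  { induction k as [|k IH].
    - exists N. split; [lia| lra].
    - destruct IH as [j [Hj Haj]].
      destruct (Hh j ltac:(lia)) as [H1 H2].
      exists (h j). split; [lia| lra]. }
  assert (HaN : 0 < a N) by (apply hpos; lia).
  destruct (Hc (a N) HaN) as [M HM].
  destruct (claim (M + 2)%nat) as [j [Hj Haj]].
  destruct j as [|[|m]]; [lia|lia|].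
  specialize (HM (S m) m ltac:(lia) ltac:(lia)).
  unfold R_dist, partial_sum1 in HM. simpl in HM.
  assert (0 < a (S (S m))) by (apply hpos; lia).
  rewrite Rabs_right in HM; lra.
Qed.

Theorem corollary2p1p4 (a : nat -> R)
  (hpos : forall n : nat, (1 <= n)%nat -> 0 < a n)
  (hyp : (exists N : nat, forall n : nat, (N <= n)%nat -> (1 <= n)%nat ->
            a (2 * n)%nat / a n > 1)
      \/ (exists N : nat, forall n : nat, (N <= n)%nat -> (1 <= n)%nat ->
            a (2 * n + 1)%nat / a n > 1 + 1 / (2 * INR n))) :
  ~ series1_converges a.
Proof.
  destruct hyp as [[N HN]|[N HN]].
  - apply (key a (Nat.max N 1) (fun n => (2 * n)%nat)); [lia|exact hpos|].
    intros n Hn. split; [lia|].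
    assert (Hp : 0 < a n) by (apply hpos; lia).
    specialize (HN n ltac:(lia) ltac:(lia)).
    apply Rmult_gt_compat_r with (r := a n) in HN; [|lra].
    unfold Rdiv in HN. rewrite Rmult_assoc, Rinv_l in HN; lra.
  - apply (key a (Nat.max N 1) (fun n => (2 * n + 1)%nat)); [lia|exact hpos|].
    intros n Hn. split; [lia|].
    assert (Hp : 0 < a n) by (apply hpos; lia).
    specialize (HN n ltac:(lia) ltac:(lia)).
    assert (Hi : 0 < 1 / (2 * INR n)).
    { apply Rdiv_lt_0_compat; [lra|]. assert (0 < INR n) by (apply lt_0_INR; lia). lra. }
    assert (HN' : a (2 * n + 1)%nat / a n > 1) by lra.
    apply Rmult_gt_compat_r with (r := a n) in HN'; [|lra].
    unfold Rdiv in HN'. rewrite Rmult_assoc, Rinv_l in HN'; lra.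
Qed.
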